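(* Suppose there is a quantum algorithm $A_0$ making $q$ queries to $U$ and $U^\dagger$ which, for $U$ Haar-random on $\mathbb{C}^d$, has (expected over $U$) advantage $\varepsilon$ in breaking honest binding of the EPR commitment scheme, i.e. acting only on $\mathsf A\otimes\mathsf D$ on $\ket0_{\mathsf A}\ket{\psi^U_0}$ it produces $\rho_0$ with $\mathbb{E}_U\mathrm{tr}(\ket{\psi^U_1}\bra{\psi^U_1}\rho_0)\ge\varepsilon$. Then for every distribution $D$ over unitaries on $\mathbb{C}^d$ there is a quantum algorithm $A_1$ making $q$ queries to $V,V^\dagger$ which, for $V\sim D$, achieves the same advantage $\varepsilon$ against the scheme instantiated with $V$.
   Context: Registers $\mathsf D,\mathsf C$ are both $\mathbb{C}^d$, $\ket{\mathrm{EPR}}=d^{-1/2}\sum_x\ket x_{\mathsf D}\ket x_{\mathsf C}$. For a unitary $U$, the commitment states are $\ket{\psi^U_0}=\ket{\mathrm{EPR}}$ and $\ket{\psi^U_1}=(I_{\mathsf D}\otimes U)\ket{\mathrm{EPR}}$; the adversary has a private register $\mathsf A$ and may act only on $\mathsf A\otimes\mathsf D$, and $\rho_0$ denotes the resulting state on $\mathsf{DC}$ after tracing out $\mathsf A$. The lemma counts only queries to the oracle (no bound on other computation). *)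

(* Defs.v *)
From HB Require Import structures.
From mathcomp Require Import all_boot all_algebra.
From mathcomp Require Import all_classical all_reals all_analysis.
From mathcomp.real_closed Require Import complex mxtens.

Set Implicit Arguments.
Unset Strict Implicit.
Unset Printing Implicit Defensive.

Import GRing.Theory Num.Theory.
Local Open Scope ring_scope.
Local Open Scope classical_set_scope.

Section QDefs.
Variable R : realType.
Local Notation C := R[i].

Definition adj m n (M : 'M[C]_(m, n)) : 'M[C]_(n, m) :=
  \matrix_(i, j) (M j i)^*.

Definition unitary n (U : 'M[C]_n) : bool :=
  (U *m adj U == 1%:M) && (adj U *m U == 1%:M).

Definition ket n (x : 'I_n) : 'cV[C]_n := delta_mx x 0.

Definition invsqrt (n : nat) : C := real_complex R ((Num.sqrt (n%:R : R))^-1).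

(* |EPR> on D (x) C, registers ordered D then C *)
Definition EPR d : 'cV[C]_(d * d) :=
  invsqrt d *: \sum_(x < d) (ket x *t ket x).

(* |psi^U_1> = (I_D (x) U)|EPR> ;  |psi^U_0> = |EPR> *)
Definition psi1 d (U : 'M[C]_d) : 'cV[C]_(d * d) := (1%:M *t U) *m EPR d.

Definition ptrace1 m n (rho : 'M[C]_(m * n)) : 'M[C]_n :=
  \matrix_(j, k) \sum_(i < m) rho (mxtens_index (i, j)) (mxtens_index (i, k)).

(* A q-query algorithm acting on A (x) D, where the private register
   A = A' (x) Q has Hilbert space C^anc (x) C^d and queries to U or U^dagger
   act on the d-dimensional query register Q.  It consists of gates
   gate 0, ..., gate q (unitaries on A (x) D, dimension (anc*d)*d) interleaved
   with q queries; query k applies U^dagger if inv_query k, else U. *)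
Record qalg (d q : nat) := QAlg {
  anc : nat;
  gate : nat -> 'M[C]_(anc * d * d);
  inv_query : nat -> bool }.

Definition qalg_wf d q (A : qalg d q) : Prop :=
  (0 < anc A)%N /\ forall k, (k <= q)%N -> unitary (gate A k).

Definition query_op d q (A : qalg d q) (U : 'M[C]_d) (k : nat)
  : 'M[C]_(anc A * d * d) :=
  ((1%:M : 'M[C]_(anc A)) *t (if inv_query A k then adj U else U))
    *t (1%:M : 'M[C]_d).

Fixpoint run_upto d q (A : qalg d q) (U : 'M[C]_d) (k : nat)
  : 'M[C]_(anc A * d * d) :=
  match k with
  | 0 => gate A 0
  | k'.+1 => gate A k'.+1 *m query_op A U k' *m run_upto A U k'
  end.

Definition run d q (A : qalg d q) (U : 'M[C]_d) := run_upto A U q.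

(* initial state |0>_A |EPR>_{DC}, registers ordered A', Q, D, C *)
Definition init_state d (a : nat) : 'cV[C]_(a * d * d * d) :=
  \col_k (let: (adx, y) := mxtens_unindex k in
           let: (ad, x) := mxtens_unindex adx in
           if (val ad == 0%N) && (x == y) then invsqrt d else 0).

Definition final_state d q (A : qalg d q) (U : 'M[C]_d)
  : 'cV[C]_(anc A * d * d * d) :=
  (run A U *t (1%:M : 'M[C]_d)) *m
    init_state d (anc A).

(* rho_0 : state on D (x) C after tracing out A *)
Definition rho0 d q (A : qalg d q) (U : 'M[C]_d) : 'M[C]_(d * d) :=
  let Phi := final_state A U in
  ptrace1 (castmx (esym (mulnA (anc A * d) d d), esym (mulnA (anc A * d) d d))
            (Phi *m adj Phi)).

Definition advantage d q (A : qalg d q) (U : 'M[C]_d) : R :=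
  complex.Re (\tr (psi1 U *m adj (psi1 U) *m rho0 A U)).

End QDefs.

(* Borel sigma-algebra of C^(d x d) = R^(2 d^2): generated by the real and
   imaginary parts of the entries. *)
Section MatMeasurable.
Variable R : realType.
Variable n : nat.

Definition cmx_gen : set (set 'M[R[i]]_n) :=
  [set S | exists (i j : 'I_n) (B : set R), measurable B /\
     (S = (fun M : 'M[R[i]]_n => complex.Re (M i j)) @^-1` B \/
      S = (fun M : 'M[R[i]]_n => complex.Im (M i j)) @^-1` B)].

Definition CMat : Type := 'M[R[i]]_n.

HB.instance Definition _ := Choice.on CMat.
HB.instance Definition _ := isPointed.Build CMat (0 : 'M[R[i]]_n).

Definition cmx_measurable : set (set CMat) := <<s cmx_gen >>.

Lemma cmx_measurable0 : cmx_measurable set0.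
Proof. exact: sigma_algebra0. Qed.
Lemma cmx_measurableC A : cmx_measurable A -> cmx_measurable (~` A).
Proof. by move=> hA; rewrite /cmx_measurable -setTD; apply: sigma_algebraCD. Qed.
Lemma cmx_measurable_bigcup (F : (set CMat)^nat) :
  (forall k, cmx_measurable (F k)) -> cmx_measurable (\bigcup_k F k).
Proof. exact: sigma_algebra_bigcup. Qed.

HB.instance Definition _ := @isMeasurable.Build default_measure_display CMat
  cmx_measurable cmx_measurable0 cmx_measurableC cmx_measurable_bigcup.

End MatMeasurable.

Definition unitary_distribution (R : realType) (n : nat)
  (mu : probability (CMat R n) R) : Prop :=
  mu [set U : CMat R n | unitary U] = 1%E.

Definition haar (R : realType) (n : nat) (mu : probability (CMat R n) R) : Prop :=
  unitary_distribution mu /\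
  forall W : 'M[R[i]]_n, unitary W ->
  forall B : set (CMat R n), measurable B ->
    mu ((fun U : CMat R n => (W *m U : CMat R n)) @^-1` B) = mu B /\
    mu ((fun U : CMat R n => (U *m W : CMat R n)) @^-1` B) = mu B.

(* Main.v *)
Require Import Defs.
From HB Require Import structures.
From mathcomp Require Import all_boot all_algebra.
From mathcomp Require Import all_classical all_reals all_analysis.
From mathcomp.real_closed Require Import complex mxtens.
From mathcomp Require Import ring lra.
From mathcomp Require Import measurable_realfun.

Set Implicit Arguments.
Unset Strict Implicit.
Unset Printing Implicit Defensive.
Import GRing.Theory Num.Theory.
Local Open Scope ring_scope.

Section Alg.
Variable R : realType.
Local Notation C := R[i].

Lemma sum_tens (m n : nat) (F : 'I_(m * n) -> C) :
  \sum_(k < m * n) F k = \sum_(i < m) \sum_(j < n) F (mxtens_index (i, j)).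
Proof.
rewrite pair_big /=; apply: reindex => /=.
exists (@mxtens_unindex m n) => k _; [case: k => a b; exact: mxtens_indexK | by rewrite -surjective_pairing mxtens_unindexK].
Qed.

Lemma adjE m n (M : 'M[C]_(m, n)) i j : adj M i j = (M j i)^*.
Proof. by rewrite mxE. Qed.

Lemma adj_mul m n p (M : 'M[C]_(m, n)) (N : 'M[C]_(n, p)) :
  adj (M *m N) = adj N *m adj M.
Proof.
apply/matrixP => i j; rewrite !mxE rmorph_sum; apply: eq_bigr => k _.
by rewrite !mxE rmorphM mulrC.
Qed.

Lemma adjK m n (M : 'M[C]_(m, n)) : adj (adj M) = M.
Proof. by apply/matrixP => i j; rewrite !mxE conjCK. Qed.

Lemma adj1 n : adj (1%:M : 'M[C]_n) = 1%:M.
Proof.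
apply/matrixP => i j; rewrite !mxE eq_sym; case: (i == j).
  by rewrite conjC1.
by rewrite conjC0.
Qed.

Lemma adj_tens m n p q (M : 'M[C]_(m, n)) (N : 'M[C]_(p, q)) :
  adj (M *t N) = adj M *t adj N.
Proof. by apply/matrixP => i j; rewrite !mxE rmorphM. Qed.

Lemma tens11 m n : (1%:M : 'M[C]_m) *t (1%:M : 'M[C]_n) = 1%:M.
Proof.
apply/matrixP => i j.
case: (mxtens_indexP i) => i1 i2; case: (mxtens_indexP j) => j1 j2.
rewrite tensmxE !mxE -natrM; congr (_%:R).
rewrite (inj_eq (can_inj (@mxtens_indexK m n))) xpair_eqE mulnb.
by [].
Qed.

Lemma unitary_mul n (A B : 'M[C]_n) : unitary A -> unitary B -> unitary (A *m B).
Proof.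
move=> /andP[/eqP A1 /eqP A2] /andP[/eqP B1 /eqP B2]; apply/andP; split; apply/eqP;
rewrite adj_mul.
  by rewrite mulmxA -(mulmxA A) B1 mulmx1 A1.
by rewrite mulmxA -(mulmxA (adj B)) A2 mulmx1 B2.
Qed.

Lemma unitary1 n : unitary (1%:M : 'M[C]_n).
Proof. by rewrite /unitary adj1 mulmx1 eqxx. Qed.

Lemma unitary_tens m n (A : 'M[C]_m) (B : 'M[C]_n) :
  unitary A -> unitary B -> unitary (A *t B).
Proof.
move=> /andP[/eqP A1 /eqP A2] /andP[/eqP B1 /eqP B2]; apply/andP; split; apply/eqP;
by rewrite /unitary adj_tens tensmx_mul ?A1 ?B1 ?A2 ?B2 tens11.
Qed.

Lemma unitary_adj n (A : 'M[C]_n) : unitary A -> unitary (adj A).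
Proof. by move=> /andP[A1 A2]; rewrite /unitary adjK A1 A2. Qed.

Definition cbar n (W : 'M[C]_n) : 'M[C]_n := (adj W)^T.

Lemma cbarE n (W : 'M[C]_n) i j : cbar W i j = (W i j)^*.
Proof. by rewrite !mxE. Qed.

Lemma unitary_cbar n (W : 'M[C]_n) : unitary W -> unitary (cbar W).
Proof.
move=> /andP[/eqP A1 /eqP A2].
rewrite /unitary.
have ->: adj (cbar W) = W^T by apply/matrixP => i j; rewrite !mxE conjCK.
apply/andP; split; apply/eqP; rewrite /cbar -trmx_mul ?A1 ?A2 trmx1 //.
Qed.


Definition liftQ a d (X : 'M[C]_d) : 'M[C]_(a * d * d) :=
  ((1%:M : 'M[C]_a) *t X) *t (1%:M : 'M[C]_d).

Lemma liftQ_mul a d (X Y : 'M[C]_d) : liftQ a X *m liftQ a Y = liftQ a (X *m Y).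
Proof. by rewrite /liftQ !tensmx_mul !mulmx1. Qed.

Lemma liftQ1 a d : liftQ a (1%:M : 'M[C]_d) = 1%:M.
Proof. by rewrite /liftQ !tens11. Qed.

Lemma unitary_liftQ a d (X : 'M[C]_d) : unitary X -> unitary (liftQ a X).
Proof. by move=> uX; rewrite /liftQ; apply: unitary_tens; [apply: unitary_tens|]; rewrite ?unitary1. Qed.

Section Twist.
Variables (d q : nat) (A : qalg R d q) (W : 'M[C]_d).

Definition tF k : 'M[C]_(anc A * d * d) :=
  if k == q then (1%:M : 'M[C]_(anc A * d)) *t cbar W else 1%:M.
Definition tP k : 'M[C]_(anc A * d * d) :=
  if (k < q)%N && ~~ inv_query A k then liftQ (anc A) W else 1%:M.
Definition tS k : 'M[C]_(anc A * d * d) :=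
  if k is k'.+1 then (if inv_query A k' then liftQ (anc A) (adj W) else 1%:M)
  else 1%:M.

Definition twist : qalg R d q :=
  @QAlg R d q (anc A) (fun k => tF k *m tP k *m gate A k *m tS k) (inv_query A).

Lemma run_twist V k : (k <= q)%N ->
  run_upto twist V k = tF k *m tP k *m run_upto A (V *m W) k.
Proof.
elim: k => [|k IH] Hk /=.
  by rewrite /tS mulmx1.
rewrite IH ?(ltnW Hk) //.
have -> : tF k = 1%:M by rewrite /tF (ltn_eqF Hk).
rewrite mul1mx.
have E : (if inv_query A k then liftQ (anc A) (adj W) else 1%:M) *m query_op twist V k *m tP k = query_op A (V *m W) k.
  rewrite /tP /query_op /= Hk /=.
  case: (inv_query A k) => /=.
    by rewrite mulmx1 liftQ_mul adj_mul.
  by rewrite mul1mx liftQ_mul.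
by rewrite -E !mulmxA.
Qed.

Lemma final_twist V :
  final_state twist V =
  (((1%:M : 'M[C]_(anc A * d)) *t cbar W) *t (1%:M : 'M[C]_d)) *m final_state A (V *m W).
Proof.
rewrite /final_state /run run_twist //.
have -> : tP q = 1%:M by rewrite /tP ltnn.
rewrite /tF eqxx mulmx1 mulmxA tensmx_mul mulmx1.
by [].
Qed.

Lemma twist_wf : unitary W -> qalg_wf A -> qalg_wf twist.
Proof.
move=> uW [a0 uG]; split => // k Hk /=.
apply: unitary_mul; [apply: unitary_mul; [apply: unitary_mul|]|].
- rewrite /tF; case: (k == q); last exact: unitary1.
  by apply: unitary_tens; [exact: unitary1| exact: unitary_cbar].
- rewrite /tP; case: (_ && _); last exact: unitary1.
  exact: unitary_liftQ.
- exact: uG.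
- rewrite /tS; case: k Hk => [|k] Hk; first exact: unitary1.
  case: (inv_query A k); last exact: unitary1.
  exact/unitary_liftQ/unitary_adj.
Qed.

End Twist.

Lemma sum_delta n (F : 'I_n -> C) j : \sum_(i < n) (j == i)%:R * F i = F j.
Proof.
rewrite (bigD1 j) //= eqxx mul1r big1 ?addr0 // => i /negbTE.
by rewrite eq_sym => ->; rewrite mul0r.
Qed.

Lemma sum_delta' n (F : 'I_n -> C) j : \sum_(i < n) (i == j)%:R * F i = F j.
Proof. by rewrite -(sum_delta F j); apply: eq_bigr => i _; rewrite eq_sym. Qed.

Lemma EPRE d (x y : 'I_d) :
  EPR R d (mxtens_index (x, y)) 0 = invsqrt R d * (x == y)%:R.
Proof.
rewrite /EPR mxE summxE; congr (_ * _).
rewrite (eq_bigr (fun z => (x == z)%:R * (y == z)%:R)).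
  by rewrite sum_delta eq_sym.
move=> z _; rewrite !mxE mxtens_indexK /=.
by rewrite !(ord1 (Ordinal _)) !eqxx !andbT.
Qed.

Lemma psi1E d (U : 'M[C]_d) (x y : 'I_d) :
  psi1 U (mxtens_index (x, y)) 0 = invsqrt R d * U y x.
Proof.
rewrite /psi1 mxE sum_tens.
rewrite (eq_bigr (fun x2 => (x == x2)%:R * (invsqrt R d * U y x2))).
  by rewrite sum_delta.
move=> x2 _.
rewrite (eq_bigr (fun y2 => (x2 == y2)%:R * ((x == x2)%:R * invsqrt R d * U y y2))).
  by rewrite sum_delta mulrA.
move=> y2 _; rewrite tensmxE.
by rewrite EPRE mxE; ring.
Qed.

Lemma Re_sum I (r : seq I) (P : pred I) (F : I -> C) :
  complex.Re (\sum_(i <- r | P i) F i) = \sum_(i <- r | P i) complex.Re (F i).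
Proof.
apply: (big_ind2 (fun a b => complex.Re a = b)) => //.
by move=> [a1 a2] b [c1 c2] e <- <-.
Qed.

Lemma Re_normsq (a : C) : 0 <= complex.Re (a * a^*).
Proof.
case: a => a1 a2 /=.
rewrite mulrN opprK.
by rewrite addr_ge0 // -expr2 sqr_ge0.
Qed.

Definition amp m n (Phi : 'cV[C]_(m * n)) (psi : 'cV[C]_n) (i : 'I_m) : C :=
  \sum_(K < n) (psi K 0)^* * Phi (mxtens_index (i, K)) 0.

Lemma tr_ptrace m n (Phi : 'cV[C]_(m * n)) (psi : 'cV[C]_n) :
  \tr (psi *m adj psi *m ptrace1 (Phi *m adj Phi)) =
  \sum_(i < m) amp Phi psi i * (amp Phi psi i)^*.
Proof.
rewrite /mxtrace.
transitivity (\sum_(J < n) \sum_(K < n) \sum_(i < m)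
   (psi J 0 * (psi K 0)^* * (Phi (mxtens_index (i, K)) 0 * (Phi (mxtens_index (i, J)) 0)^*))).
  apply: eq_bigr => J _; rewrite mxE; apply: eq_bigr => K _.
  rewrite !mxE big_ord1 !mxE mulr_sumr; apply: eq_bigr => i _.
  by rewrite !mxE big_ord1 !mxE.
rewrite exchange_big /=.
transitivity (\sum_(K < n) \sum_(J < n) \sum_(i < m)
   ((psi K 0)^* * Phi (mxtens_index (i, K)) 0 * ((psi J 0)^* * Phi (mxtens_index (i, J)) 0)^*)).
  apply: eq_bigr => K _; apply: eq_bigr => J _; apply: eq_bigr => i _.
  rewrite rmorphM /=. have cK : forall z : C, z^*^* = z by move=> z; rewrite conjCK. rewrite cK; ring.
symmetry.
rewrite (eq_bigr (fun i => \sum_(K < n) \sum_(J < n)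
   ((psi K 0)^* * Phi (mxtens_index (i, K)) 0 * ((psi J 0)^* * Phi (mxtens_index (i, J)) 0)^*))); last first.
  move=> i _; rewrite /amp mulr_suml; apply: eq_bigr => K _.
  by rewrite rmorph_sum mulr_sumr.
rewrite exchange_big /=; apply: eq_bigr => K _.
by rewrite exchange_big.
Qed.

Lemma cast_outer m n (e : m = n) (Phi : 'cV[C]_m) :
  castmx (e, e) (Phi *m adj Phi) =
  castmx (e, erefl 1%N) Phi *m adj (castmx (e, erefl 1%N) Phi).
Proof. by case: n / e. Qed.

Definition castPhi m d (Phi : 'cV[C]_(m * d * d)) : 'cV[C]_(m * (d * d)) :=
  castmx (esym (mulnA m d d), erefl 1%N) Phi.

Lemma castPhiE m d (Phi : 'cV[C]_(m * d * d)) i x y :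
  castPhi Phi (mxtens_index (i, mxtens_index (x, y))) 0 =
  Phi (mxtens_index (mxtens_index (i, x), y)) 0.
Proof.
rewrite castmxE /=; congr (Phi _ _); last by apply: val_inj.
by apply: val_inj => /=; rewrite mulnDl -mulnA addnA.
Qed.

Lemma adv_amp d q (A : qalg R d q) U :
  advantage A U = \sum_(i < anc A * d)
     complex.Re (amp (castPhi (final_state A U)) (psi1 U) i *
                 (amp (castPhi (final_state A U)) (psi1 U) i)^*).
Proof. by rewrite /advantage /rho0 cast_outer tr_ptrace Re_sum. Qed.

Lemma adv_ge0 d q (A : qalg R d q) U : 0 <= advantage A U.
Proof. by rewrite adv_amp; apply: sumr_ge0 => i _; exact: Re_normsq. Qed.

Lemma ampE m d (Phi : 'cV[C]_(m * d * d)) (psi : 'cV[C]_(d * d)) i :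
  amp (castPhi Phi) psi i = \sum_(x < d) \sum_(y < d)
    (psi (mxtens_index (x, y)) 0)^* * Phi (mxtens_index (mxtens_index (i, x), y)) 0.
Proof.
rewrite /amp sum_tens; apply: eq_bigr => x _; apply: eq_bigr => y _.
by rewrite castPhiE.
Qed.

Lemma id1E n (i j : 'I_n) : (1%:M : 'M[C]_n) i j = (i == j)%:R.
Proof. by rewrite mxE. Qed.

Lemma tw_entry m d (W : 'M[C]_d) (Phi : 'cV[C]_(m * d * d)) i x y :
  ((((1%:M : 'M[C]_m) *t cbar W) *t (1%:M : 'M[C]_d)) *m Phi)
     (mxtens_index (mxtens_index (i, x), y)) 0 =
  \sum_(x2 < d) (W x x2)^* * Phi (mxtens_index (mxtens_index (i, x2), y)) 0.
Proof.
rewrite mxE sum_tens.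
rewrite (eq_bigr (fun p => \sum_(y2 < d) (y == y2)%:R *
    ((((1%:M : 'M[C]_m) *t cbar W) (mxtens_index (i, x)) p) *
      Phi (mxtens_index (p, y2)) 0))); last first.
  move=> p _; apply: eq_bigr => y2 _; rewrite tensmxE id1E; ring.
rewrite (eq_bigr (fun p => (((1%:M : 'M[C]_m) *t cbar W) (mxtens_index (i, x)) p) *
      Phi (mxtens_index (p, y)) 0)); last by move=> p _; rewrite sum_delta.
rewrite sum_tens (eq_bigr (fun i2 => (i == i2)%:R *
   \sum_(x2 < d) (W x x2)^* * Phi (mxtens_index (mxtens_index (i2, x2), y)) 0)).
  by rewrite sum_delta.
move=> i2 _; rewrite mulr_sumr; apply: eq_bigr => x2 _.
by rewrite tensmxE cbarE id1E; ring.
Qed.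

Lemma adv_twist d q (A : qalg R d q) (W V : 'M[C]_d) :
  advantage (twist A W) V = advantage A (V *m W).
Proof.
rewrite !adv_amp /=; apply: eq_bigr => i _.
suff -> : amp (castPhi (final_state (twist A W) V)) (psi1 V) i =
          amp (castPhi (final_state A (V *m W))) (psi1 (V *m W)) i by [].
rewrite !ampE.
set P := final_state A (V *m W).
rewrite final_twist.
transitivity (\sum_(x < d) \sum_(y < d) \sum_(x2 < d)
   ((invsqrt R d * V y x)^* * ((W x x2)^* * P (mxtens_index (mxtens_index (i, x2), y)) 0))).
  apply: eq_bigr => x _; apply: eq_bigr => y _.
  by rewrite psi1E tw_entry mulr_sumr.
transitivity (\sum_(x2 < d) \sum_(y < d) \sum_(x < d)
   ((invsqrt R d * V y x)^* * ((W x x2)^* * P (mxtens_index (mxtens_index (i, x2), y)) 0))).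
  rewrite (eq_bigr (fun x => \sum_(x2 < d) \sum_(y < d)
   ((invsqrt R d * V y x)^* * ((W x x2)^* * P (mxtens_index (mxtens_index (i, x2), y)) 0)))); last first.
    by move=> x _; rewrite exchange_big.
  rewrite exchange_big /=; apply: eq_bigr => x2 _; by rewrite exchange_big.
apply: eq_bigr => x2 _; apply: eq_bigr => y _.
rewrite psi1E [(V *m W) y x2]mxE mulr_sumr rmorph_sum mulr_suml; apply: eq_bigr => x _.
by rewrite !rmorphM /=; ring.
Qed.

End Alg.

Local Open Scope classical_set_scope.

Section Meas.
Variable R : realType.
Local Notation C := R[i].
Context dd (T : measurableType dd).

Definition cmeas (f : T -> C) :=
  measurable_fun setT (fun t => complex.Re (f t)) /\
  measurable_fun setT (fun t => complex.Im (f t)).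

Lemma cmeas_cst c : cmeas (fun _ => c).
Proof. by split; exact: measurable_cst. Qed.

Lemma cmeas_add f g : cmeas f -> cmeas g -> cmeas (fun t => f t + g t).
Proof.
move=> [f1 f2] [g1 g2]; split.
  have -> : (fun t => complex.Re (f t + g t)) =
     (fun t => complex.Re (f t)) \+ (fun t => complex.Re (g t)).
    by apply/funext => t /=; case: (f t) => ? ?; case: (g t) => ? ? /=.
  exact: measurable_funD.
have -> : (fun t => complex.Im (f t + g t)) =
   (fun t => complex.Im (f t)) \+ (fun t => complex.Im (g t)).
  by apply/funext => t /=; case: (f t) => ? ?; case: (g t) => ? ? /=.
exact: measurable_funD.
Qed.

Lemma cmeas_mul f g : cmeas f -> cmeas g -> cmeas (fun t => f t * g t).
Proof.
move=> [f1 f2] [g1 g2]; split.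
  have -> : (fun t => complex.Re (f t * g t)) =
     ((fun t => complex.Re (f t)) \* (fun t => complex.Re (g t))) \-
     ((fun t => complex.Im (f t)) \* (fun t => complex.Im (g t))).
    by apply/funext => t /=; case: (f t) => ? ?; case: (g t) => ? ? /=.
  by apply: measurable_funB; apply: measurable_funM.
have -> : (fun t => complex.Im (f t * g t)) =
   ((fun t => complex.Re (f t)) \* (fun t => complex.Im (g t))) \+
   ((fun t => complex.Im (f t)) \* (fun t => complex.Re (g t))).
  by apply/funext => t /=; case: (f t) => ? ?; case: (g t) => ? ? /=.
by apply: measurable_funD; apply: measurable_funM.
Qed.

Lemma cmeas_conj f : cmeas f -> cmeas (fun t => (f t)^*).
Proof.
move=> [f1 f2]; split.
  have -> : (fun t => complex.Re ((f t)^*)) = (fun t => complex.Re (f t)).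
    by apply/funext => t /=; case: (f t) => ? ? /=.
  by [].
have -> : (fun t => complex.Im ((f t)^*)) = \- (fun t => complex.Im (f t)).
  by apply/funext => t /=; case: (f t) => ? ? /=.
exact: measurable_funN.
Qed.

Lemma cmeas_sum I (r : seq I) (P : pred I) (F : I -> T -> C) :
  (forall i, cmeas (F i)) -> cmeas (fun t => \sum_(i <- r | P i) F i t).
Proof.
move=> hF; elim: r => [|a r IH].
  have -> : (fun t => \sum_(i <- [::] | P i) F i t) = (fun _ => 0).
    by apply/funext => t; rewrite big_nil.
  exact: cmeas_cst.
have -> : (fun t => \sum_(i <- a :: r | P i) F i t) =
  (fun t => (if P a then F a t else 0) + \sum_(i <- r | P i) F i t).
  apply/funext => t; rewrite big_cons; by case: (P a); rewrite ?add0r.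
apply: cmeas_add => //; case: (P a) => //; exact: cmeas_cst.
Qed.

Definition mxmeas m n (F : T -> 'M[C]_(m, n)) := forall i j, cmeas (fun t => F t i j).

Lemma mxmeas_cst m n (M : 'M[C]_(m, n)) : mxmeas (fun _ => M).
Proof. by move=> i j; exact: cmeas_cst. Qed.

Lemma mxmeas_mul m n p (F : T -> 'M[C]_(m, n)) (G : T -> 'M[C]_(n, p)) :
  mxmeas F -> mxmeas G -> mxmeas (fun t => F t *m G t).
Proof.
move=> hF hG i j.
have -> : (fun t => (F t *m G t) i j) = (fun t => \sum_k F t i k * G t k j).
  by apply/funext => t; rewrite mxE.
by apply: cmeas_sum => k; apply: cmeas_mul.
Qed.

Lemma mxmeas_tens m n p q (F : T -> 'M[C]_(m, n)) (G : T -> 'M[C]_(p, q)) :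
  mxmeas F -> mxmeas G -> mxmeas (fun t => F t *t G t).
Proof.
move=> hF hG i j.
have -> : (fun t => (F t *t G t) i j) = (fun t =>
   F t (mxtens_unindex i).1 (mxtens_unindex j).1 *
   G t (mxtens_unindex i).2 (mxtens_unindex j).2).
  by apply/funext => t; rewrite mxE.
by apply: cmeas_mul.
Qed.

Lemma mxmeas_adj m n (F : T -> 'M[C]_(m, n)) : mxmeas F -> mxmeas (fun t => adj (F t)).
Proof.
move=> hF i j.
have -> : (fun t => adj (F t) i j) = (fun t => (F t j i)^*).
  by apply/funext => t; rewrite mxE.
exact: cmeas_conj.
Qed.

Lemma mxmeas_cast m n m' n' (e : (m = m') * (n = n')) (F : T -> 'M[C]_(m, n)) :
  mxmeas F -> mxmeas (fun t => castmx e (F t)).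
Proof.
move=> hF i j.
have -> : (fun t => castmx e (F t) i j) =
   (fun t => F t (cast_ord (esym e.1) i) (cast_ord (esym e.2) j)).
  by apply/funext => t; rewrite castmxE.
exact: hF.
Qed.

Lemma mxmeas_if m n (b : bool) (F G : T -> 'M[C]_(m, n)) :
  mxmeas F -> mxmeas G -> mxmeas (fun t => if b then F t else G t).
Proof. by case: b. Qed.

Lemma mxmeas_run d q (A : qalg R d q) (F : T -> 'M[C]_d) k :
  mxmeas F -> mxmeas (fun t => run_upto A (F t) k).
Proof.
move=> hF; elim: k => [|k IH] /=; first exact: mxmeas_cst.
apply: mxmeas_mul => //; apply: mxmeas_mul; first exact: mxmeas_cst.
rewrite /query_op.
apply: mxmeas_tens; last exact: mxmeas_cst.
apply: mxmeas_tens; first exact: mxmeas_cst.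
by apply: mxmeas_if => //; apply: mxmeas_adj.
Qed.

Lemma measurable_adv d q (A : qalg R d q) (F : T -> 'M[C]_d) :
  mxmeas F -> measurable_fun setT (fun t => advantage A (F t)).
Proof.
move=> hF.
have -> : (fun t => advantage A (F t)) = (fun t => \sum_(i < anc A * d)
     complex.Re (amp (castPhi (final_state A (F t))) (psi1 (F t)) i *
                 (amp (castPhi (final_state A (F t))) (psi1 (F t)) i)^*)).
  by apply/funext => t; rewrite adv_amp.
apply: measurable_sum => i.
have hP : mxmeas (fun t => castPhi (final_state A (F t))).
  apply: mxmeas_cast; rewrite /final_state.
  apply: mxmeas_mul; last exact: mxmeas_cst.
  apply: mxmeas_tens; last exact: mxmeas_cst.
  exact: mxmeas_run.
have hpsi : mxmeas (fun t => psi1 (F t)).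
  rewrite /psi1; apply: mxmeas_mul; last exact: mxmeas_cst.
  by apply: mxmeas_tens => //; exact: mxmeas_cst.
have ha : cmeas (fun t => amp (castPhi (final_state A (F t))) (psi1 (F t)) i).
  rewrite /amp; apply: cmeas_sum => K; apply: cmeas_mul; last exact: hP.
  exact/cmeas_conj/hpsi.
by have [] := cmeas_mul ha (cmeas_conj ha).
Qed.

End Meas.

Section Inst.
Variable R : realType.
Local Notation C := R[i].
Variable d : nat.
Local Notation CM := (CMat R d).

Lemma cmx_measE : @measurable _ CM = <<s @cmx_gen R d >>.
Proof. by []. Qed.

Lemma mxmeas_id : mxmeas (fun U : CM => (U : 'M[C]_d)).
Proof.
move=> i j; split => _ B mB; rewrite setTI; apply: sub_sigma_algebra;
  exists i, j, B; split => //; [left|right]; by []. 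
Qed.

Lemma mxmeas_fst : mxmeas (fun p : CM * CM => (p.1 : 'M[C]_d)).
Proof.
move=> i j; have [h1 h2] := mxmeas_id i j; split.
  exact: (measurableT_comp h1 measurable_fst).
exact: (measurableT_comp h2 measurable_fst).
Qed.

Lemma mxmeas_snd : mxmeas (fun p : CM * CM => (p.2 : 'M[C]_d)).
Proof.
move=> i j; have [h1 h2] := mxmeas_id i j; split.
  exact: (measurableT_comp h1 measurable_snd).
exact: (measurableT_comp h2 measurable_snd).
Qed.

Lemma measurable_mulmxl (V : 'M[C]_d) :
  measurable_fun setT (fun W : CM => (V *m W : CM)).
Proof.
eapply (@measurability _ _ CM CM setT _ (@cmx_gen R d : set (set CM))); first exact: cmx_measE. move=> _ [S [i [j [B [mB [->|->]]]]]] <-.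
  have := (mxmeas_mul (mxmeas_cst CM V) mxmeas_id i j).1.
  by move=> /(_ measurableT B mB).
have := (mxmeas_mul (mxmeas_cst CM V) mxmeas_id i j).2.
by move=> /(_ measurableT B mB).
Qed.

End Inst.

Section EqMeas.
Variable R : realType.
Local Notation C := R[i].
Context dd (T : measurableType dd).

Lemma eqC_ReIm (a b : C) :
  (a == b) = (complex.Re a == complex.Re b) && (complex.Im a == complex.Im b).
Proof.
case: a => a1 a2; case: b => b1 b2 /=.
apply/eqP/andP => [[-> ->]|[/eqP -> /eqP ->]] //.
Qed.

Lemma measurable_band I (r : seq I) (P : I -> T -> bool) :
  (forall i, measurable_fun setT (P i)) ->
  measurable_fun setT (fun t => \big[andb/true]_(i <- r) P i t).
Proof.
move=> hP; elim: r => [|a r IH].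
  have -> : (fun t => \big[andb/true]_(i <- [::]) P i t) = (fun _ => true).
    by apply/funext => t; rewrite big_nil.
  exact: measurable_cst.
have -> : (fun t => \big[andb/true]_(i <- a :: r) P i t) =
  (fun t => P a t && \big[andb/true]_(i <- r) P i t).
  by apply/funext => t; rewrite big_cons.
exact: measurable_and.
Qed.

Lemma mx_eqE m n (M N : 'M[C]_(m, n)) :
  (M == N) = \big[andb/true]_(i <- enum 'I_m) \big[andb/true]_(j <- enum 'I_n)
     (M i j == N i j).
Proof.
rewrite big_all; apply/eqP/allP => [-> i _|h].
  by rewrite big_all; apply/allP => j _.
apply/matrixP => i j; have := h i (mem_enum _ i).
by rewrite big_all => /allP /(_ j (mem_enum _ j)) /eqP.
Qed.

Lemma measurable_mxeq m n (F G : T -> 'M[C]_(m, n)) :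
  mxmeas F -> mxmeas G -> measurable_fun setT (fun t => F t == G t).
Proof.
move=> hF hG.
have -> : (fun t => F t == G t) = (fun t =>
   \big[andb/true]_(i <- enum 'I_m) \big[andb/true]_(j <- enum 'I_n)
     ((complex.Re (F t i j) == complex.Re (G t i j)) &&
      (complex.Im (F t i j) == complex.Im (G t i j)))).
  apply/funext => t; rewrite mx_eqE; apply: eq_bigr => i _; apply: eq_bigr => j _.
  by rewrite eqC_ReIm.
apply: measurable_band => i; apply: measurable_band => j.
have [f1 f2] := hF i j; have [g1 g2] := hG i j.
by apply: measurable_and; apply: measurable_fun_eqr.
Qed.

End EqMeas.

Lemma measurable_unitary (R : realType) (d : nat) :
  measurable [set U : CMat R d | unitary U].
Proof.
have mU : measurable_fun setT (fun U : CMat R d => unitary U).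
  rewrite /unitary; apply: measurable_and; apply: measurable_mxeq;
  by [apply: mxmeas_mul; [exact: mxmeas_id | exact/mxmeas_adj/mxmeas_id]
     |apply: mxmeas_mul; [exact/mxmeas_adj/mxmeas_id | exact: mxmeas_id]
     | exact: mxmeas_cst].
have := mU measurableT [set true] I.
by rewrite setTI; congr measurable; apply/seteqP; split => x /=.
Qed.

Unset Implicit Arguments.
Import order.Order.TTheory.
Local Open Scope ereal_scope.

Lemma exists_ge dd (T : measurableType dd) (R : realType) (mu : probability T R)
  (S : set T) (mS : measurable S) (hS : mu S = 1)
  (H : T -> \bar R) (mH : measurable_fun setT H) (H0 : forall x, 0 <= H x)
  (eps : R) : eps%:E <= \int[mu]_x H x -> exists x, S x /\ eps%:E <= H x.
Proof.
move=> hI; apply: contrapT => hn.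
have hlt : forall x, S x -> H x < eps%:E.
  move=> x Sx; rewrite ltNge; apply/negP => hx; apply: hn; by exists x.
have mSC : measurable (~` S) by exact: measurableC.
have muSC : mu (~` S) = 0 by rewrite probability_setC // hS subee.
have mHS : measurable_fun S H := measurable_funS measurableT (@subsetT _ S) mH.
have hIS : eps%:E <= \int[mu]_(x in S) H x.
  have -> : \int[mu]_(x in S) H x = \int[mu]_x H x.
    transitivity (\int[mu]_(x in S `|` ~` S) H x); last by rewrite setUv.
    rewrite ge0_integral_setU //.
    - by rewrite [X in _ = _ + X]null_set_integral ?adde0 //; exact: measurable_funTS.
    - exact: measurable_funTS.
    - by rewrite disj_set2E setICr.
  exact: hI.
have Hfin : forall x, S x -> H x \is a fin_num.
  move=> x Sx; rewrite ge0_fin_numE ?H0 //; apply: lt_trans (hlt x Sx) _.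
  exact: ltry.
pose g x := eps%:E - H x.
have g0 : forall x, S x -> 0 < g x by move=> x Sx; rewrite /g sube_gt0 hlt.
have mg : measurable_fun S g.
  apply: emeasurable_funB => //; exact: measurable_cst.
have hsum : \int[mu]_(x in S) (g x + H x) = \int[mu]_(x in S) g x + \int[mu]_(x in S) H x.
  by apply: ge0_integralD => // x Sx; exact: ltW (g0 x Sx).
have heps : \int[mu]_(x in S) (g x + H x) = eps%:E.
  rewrite (eq_integral (fun _ => eps%:E)); last first.
    by move=> x; rewrite inE => Sx; rewrite /g subeK // Hfin.
  by rewrite integral_cst // -[RHS]mule1 -hS.
have gle : \int[mu]_(x in S) g x <= 0.
  have : \int[mu]_(x in S) g x + eps%:E <= 0 + eps%:E.
    rewrite add0e; rewrite -[X in _ <= X]heps hsum; exact: leeD2l.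
  by rewrite leeD2rE.
have gint0 : \int[mu]_(x in S) `|g x| = 0.
  apply/eqP; rewrite eq_le; apply/andP; split; last exact: integral_ge0.
  rewrite (eq_integral g) // => x; rewrite inE => Sx.
  by rewrite gee0_abs // ltW // g0.
have := (ae_eq_integral_abs mu mS mg).1 gint0.
move=> [N [mN muN SN]].
have : S `<=` N.
  move=> x Sx; apply: SN => /= /(_ Sx) gx0.
  by have := g0 x Sx; rewrite gx0 ltxx.
move=> /(le_measure mu); rewrite !inE => /(_ mS mN).
move=> h; have : (1 <= 0 :> \bar R) by rewrite -[X in X <= _]hS -[X in _ <= X]muN. by rewrite lee_fin ler10.
Qed.

Lemma invariance (R : realType) (d : nat) (mu : probability (CMat R d) R)
  (hmu : haar mu) q (A : qalg R d q) (V : 'M[R[i]]_d) : unitary V ->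
  \int[mu]_(W in setT) (advantage A (V *m W))%:E =
  \int[mu]_(W in setT) (advantage A W)%:E.
Proof.
move=> uV.
have mphi := measurable_mulmxl V.
have mf : measurable_fun setT (fun U : CMat R d => (advantage A U)%:E).
  apply/measurable_EFinP. apply: measurable_adv. exact: mxmeas_id.
pose mu' : {measure set (CMat R d) -> \bar R} := mu.
have E := @ge0_integral_pushforward _ _ (CMat R d) (CMat R d) R _ mphi mu' setT (fun U : CMat R d => (advantage A U)%:E) measurableT mf.
rewrite (eq_measure_integral mu') in E; last first.
  move=> B mB _; rewrite /pushforward.
  by have [_ /(_ V uV B mB) []] := hmu.
have E2 : (fun W : CMat R d => (V *m W : CMat R d)) @^-1` setT = setT by [].
rewrite E2 in E.
have E3 : \int[mu]_(W in setT) (advantage A (V *m W))%:E = \int[mu']_(x in setT) ((fun U : CMat R d => (advantage A U)%:E) \o (fun W : CMat R d => (V *m W : CMat R d))) x.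
  by apply: eq_integral.
have E4 := E (fun y _ => adv_ge0 _ _).
apply: (etrans E3). apply: (etrans (esym E4)).

apply: eq_measure_integral => B mB _.

by [].
Qed.


Theorem mainTheorem17 (R : realType) (d q : nat) (eps : R)
  (haar_mu : probability (CMat R d) R) (A0 : qalg R d q) :
  (0 < d)%N ->
  haar haar_mu ->
  qalg_wf A0 ->
  \int[haar_mu]_(U in setT) (advantage A0 U)%:E >= eps%:E ->
  forall D : probability (CMat R d) R,
    unitary_distribution D ->
    exists A1 : qalg R d q,
      qalg_wf A1 /\
      \int[D]_(V in setT) (advantage A1 V)%:E >= eps%:E.
Proof.
move=> _ hH wf0 Heps D hD.
have [e0|e0] := boolP (eps <= 0)%R.
  exists A0; split => //; apply: le_trans (integral_ge0 _ _).
    by rewrite lee_fin.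
  by move=> x _; rewrite lee_fin adv_ge0.

pose S := [set U : CMat R d | unitary U].
have mS : measurable S := @measurable_unitary R d.
pose F := fun p : CMat R d * CMat R d => (advantage A0 (p.2 *m p.1))%:E.
have mF : measurable_fun setT F.
  apply/measurable_EFinP; apply: measurable_adv.
  exact: mxmeas_mul (@mxmeas_snd R d) (@mxmeas_fst R d).
have F0 : forall p, 0 <= F p by move=> p; rewrite lee_fin adv_ge0.

have FT := @fubini_tonelli _ _ _ _ R haar_mu D F mF F0.

have hG : forall V : CMat R d, unitary V ->
    \int[haar_mu]_W F (W, V) = \int[haar_mu]_W (advantage A0 W)%:E.
  move=> V uV.
  transitivity (\int[haar_mu]_(W in setT) (advantage A0 (V *m W))%:E).
    by apply: eq_integral.
  exact: invariance.

have mG := @measurable_fun_fubini_tonelli_G _ _ _ _ R haar_mu F mF F0.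
pose G := fun y : CMat R d => \int[haar_mu]_x F (x, y).
have G0 : forall y, 0 <= G y.
  by move=> y; apply: integral_ge0 => x _; exact: F0.
have hB : eps%:E <= \int[D]_y G y.
  have E1 : \int[D]_(V in S) (cst eps%:E) V = eps%:E.
    by rewrite integral_cst // -[RHS]mule1 -hD.

  have h1 : \int[D]_(V in S) G V <= \int[D]_(V in setT) G V.
    exact: (ge0_subset_integral D mS measurableT mG (fun y _ => G0 y) (@subsetT _ S)).

  have h2 : \int[D]_(V in S) (cst eps%:E) V <= \int[D]_(V in S) G V.
    have f10 : forall x, S x -> 0 <= cst eps%:E x.
      by move=> x _; rewrite lee_fin ltW // ltNge.

    have mf1 : measurable_fun S (cst eps%:E : CMat R d -> \bar R) by exact: measurable_cst.

    have mf2 : measurable_fun S G by exact: measurable_funTS mG.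

    have hpt : forall x, S x -> cst eps%:E x <= G x.
      by move=> V SV; rewrite /cst /G (hG V SV).

    exact: (ge0_le_integral D mS f10 mf1 mf2 hpt).

  by rewrite -E1; apply: le_trans h2 h1.

have hC : eps%:E <= \int[haar_mu]_x \int[D]_y F (x, y) by rewrite FT.
have mF' := @measurable_fun_fubini_tonelli_F _ _ _ _ R D F mF F0.
have F0' : forall x, 0 <= fubini_F D F x.
  by move=> x; apply: integral_ge0 => y _; exact: F0.
have [W [uW hW]] := @exists_ge _ _ R haar_mu S mS hH.1 _ mF' F0' eps hC.

exists (twist A0 W); split; first exact: twist_wf.
have -> : \int[D]_(V in setT) (advantage (twist A0 W) V)%:E = fubini_F D F W.
  by apply: eq_integral => V _; rewrite adv_twist.
exact: hW.
Qed.
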